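(* Let $n\ge2$ and let $V$ be the potential of the planar $n$-body problem with all masses equal. Let $c\in\mathbb{R}^{2n}$ be the regular $n$-gon configuration $c_i=\alpha\cos\frac{2\pi(i-1)}n$, $c_{i+n}=\alpha\sin\frac{2\pi(i-1)}n$ ($i=1,\dots,n$), with $\alpha>0$ chosen so that $c$ is a Darboux point with multiplier $-1$. Let $v\in\mathbb{R}^{2n}$ be given by $v_i=\cos\frac{4\pi(i-1)}n$, $v_{i+n}=\sin\frac{4\pi(i-1)}n$. Then $Wv=J^{-1}WJv=\lambda v$ with $$\lambda=2-\frac{2\sin(\pi/n)}{1-\cos(\pi/n)}\Big(\sum_{j=1}^{n-1}\frac1{\sin(\pi j/n)}\Big)^{-1}.$$
   Context: Positions $q\in\mathbb{C}^{2n}$, body $i$ at $(q_i,q_{i+n})$, masses $m_i=m>0$ for all $i$ and $m_{i+n}:=m_i$. $V(q)=\sum_{i<j}\frac{m_im_j}{\sqrt{(q_i-q_j)^2+(q_{i+n}-q_{j+n})^2}}$. Darboux point with multiplier $-1$: $\partial V/\partial q_k(c)=-m_kc_k$ for all $k$. $W_{k,l}=\frac1{m_k}\frac{\partial^2V}{\partial q_k\partial q_l}(c)$. $J=\begin{pmatrix}0&-I_n\\ I_n&0\end{pmatrix}$. *)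

(* Defs.v *)
From Stdlib Require Import Reals Lra Lia.
Open Scope R_scope.

(* Configurations q : nat -> R, with 0-based indices 0..2n-1;
   body i (0 <= i < n) sits at (q i, q (i+n)). *)

Fixpoint rsum (n : nat) (f : nat -> R) : R :=
  match n with
  | O => 0
  | S k => rsum k f + f k
  end.

Definition dist2 (n : nat) (q : nat -> R) (i j : nat) : R :=
  sqrt ((q i - q j) ^ 2 + (q (i + n)%nat - q (j + n)%nat) ^ 2).

Definition Vpot (n : nat) (m : R) (q : nat -> R) : R :=
  rsum n (fun j => rsum j (fun i => m * m / dist2 n q i j)).

Definition upd (q : nat -> R) (k : nat) (t : R) : nat -> R :=
  fun i => if Nat.eqb i k then t else q i.

Definition collision_free (n : nat) (q : nat -> R) : Prop :=
  forall i j, (i < n)%nat -> (j < n)%nat -> i <> j ->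
    (q i - q j) ^ 2 + (q (i + n)%nat - q (j + n)%nat) ^ 2 <> 0.

Definition is_partial (f : (nat -> R) -> R) (q : nat -> R) (k : nat) (d : R) : Prop :=
  derivable_pt_lim (fun t => f (upd q k t)) (q k) d.

(* regular n-gon of radius alpha, 0-based version of c_i, c_{i+n} *)
Definition ngon (n : nat) (alpha : R) (k : nat) : R :=
  if Nat.ltb k n then alpha * cos (2 * PI * INR k / INR n)
  else alpha * sin (2 * PI * INR (k - n) / INR n).

Definition vvec (n : nat) (k : nat) : R :=
  if Nat.ltb k n then cos (4 * PI * INR k / INR n)
  else sin (4 * PI * INR (k - n) / INR n).

Definition mv (n : nat) (A : nat -> nat -> R) (x : nat -> R) : nat -> R :=
  fun k => rsum (2 * n) (fun l => A k l * x l).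

(* J = [[0, -I],[I, 0]] and its inverse J^{-1} = -J = [[0, I],[-I, 0]] *)
Definition Jmul (n : nat) (x : nat -> R) : nat -> R :=
  fun k => if Nat.ltb k n then - x (k + n)%nat else x (k - n)%nat.
Definition Jinvmul (n : nat) (x : nat -> R) : nat -> R :=
  fun k => if Nat.ltb k n then x (k + n)%nat else - x (k - n)%nat.

Definition lambda14 (n : nat) : R :=
  2 - 2 * sin (PI / INR n) / (1 - cos (PI / INR n))
      * / rsum (n - 1) (fun j => / sin (PI * INR (S j) / INR n)).

(* Main.v *)
Require Import Defs.
From Stdlib Require Import Reals Lra Lia.
Open Scope R_scope.

Definition dl (k a : nat) : R := if Nat.eqb a k then 1 else 0.

Lemma dpl_ext (f g : R -> R) x l l' :
  (forall t, f t = g t) -> l = l' -> derivable_pt_lim g x l -> derivable_pt_lim f x l'.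
Proof.
  intros Hfg <- Hd eps He; destruct (Hd eps He) as [d Hd'].
  exists d; intros h Hh Hh'; rewrite !Hfg; auto.
Qed.

Lemma dpl_sq (X : R -> R) x dX : derivable_pt_lim X x dX ->
  derivable_pt_lim (fun t => X t ^ 2) x (2 * X x * dX).
Proof.
  intros H. eapply dpl_ext with (g := comp (fun y => y ^ 2) X).
  3:{ apply derivable_pt_lim_comp; eauto. apply derivable_pt_lim_pow. }
  - intros; reflexivity.
  - simpl; ring.
Qed.

Lemma dpl_sqrtg (g : R -> R) x dg : derivable_pt_lim g x dg -> 0 < g x ->
  derivable_pt_lim (fun t => sqrt (g t)) x (dg / (2 * sqrt (g x))).
Proof.
  intros H Hp. eapply dpl_ext with (g := comp sqrt g).
  3:{ apply derivable_pt_lim_comp; eauto. apply derivable_pt_lim_sqrt; auto. }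
  - intros; reflexivity.
  - unfold Rdiv; ring.
Qed.

Lemma dpl_plus f g x a b : derivable_pt_lim f x a -> derivable_pt_lim g x b ->
  derivable_pt_lim (fun t => f t + g t) x (a + b).
Proof. intros; eapply dpl_ext with (g := (f + g)%F); [intros; reflexivity| reflexivity|].
  apply derivable_pt_lim_plus; auto. Qed.

Lemma dpl_minus f g x a b : derivable_pt_lim f x a -> derivable_pt_lim g x b ->
  derivable_pt_lim (fun t => f t - g t) x (a - b).
Proof. intros; eapply dpl_ext with (g := (f - g)%F); [intros; reflexivity| reflexivity|].
  apply derivable_pt_lim_minus; auto. Qed.

Lemma dpl_mult f g x a b : derivable_pt_lim f x a -> derivable_pt_lim g x b ->
  derivable_pt_lim (fun t => f t * g t) x (a * g x + f x * b).
Proof. intros; eapply dpl_ext with (g := (f * g)%F); [intros; reflexivity| reflexivity|].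
  apply derivable_pt_lim_mult; auto. Qed.

Lemma dpl_const a x : derivable_pt_lim (fun _ => a) x 0.
Proof. apply derivable_pt_lim_const. Qed.

Lemma dpl_div f g x a b : derivable_pt_lim f x a -> derivable_pt_lim g x b -> g x <> 0 ->
  derivable_pt_lim (fun t => f t / g t) x ((a * g x - b * f x) / (g x)²).
Proof. intros; eapply dpl_ext with (g := (f / g)%F); [intros; reflexivity| reflexivity|].
  apply derivable_pt_lim_div; auto. Qed.

Lemma dpl_coord (q : nat -> R) k a x :
  derivable_pt_lim (fun t => upd q k t a) x (dl k a).
Proof.
  unfold upd, dl. destruct (Nat.eqb a k).
  - apply dpl_ext with (g := id) (l := 1); [intros; reflexivity | reflexivity |].
    apply derivable_pt_lim_id.
  - apply dpl_const.
Qed.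

Lemma dpl_f1 (X Y : R -> R) x dX dY K :
  derivable_pt_lim X x dX -> derivable_pt_lim Y x dY -> X x ^ 2 + Y x ^ 2 <> 0 ->
  derivable_pt_lim (fun t => K / sqrt (X t ^ 2 + Y t ^ 2)) x
    (- K * (X x * dX + Y x * dY) / sqrt (X x ^ 2 + Y x ^ 2) ^ 3).
Proof.
  intros HX HY Hn.
  assert (Hp : 0 < X x ^ 2 + Y x ^ 2) by nra.
  assert (Hr : 0 < sqrt (X x ^ 2 + Y x ^ 2)) by (apply sqrt_lt_R0; auto).
  eapply dpl_ext; [intros; reflexivity| |].
  2:{ apply dpl_div. apply dpl_const.
      apply dpl_sqrtg. apply dpl_plus; apply dpl_sq; eauto. auto. lra. }
  unfold Rsqr. field. lra.
Qed.

Lemma dpl_f2 (X Y : R -> R) x dX dY K p q :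
  derivable_pt_lim X x dX -> derivable_pt_lim Y x dY -> X x ^ 2 + Y x ^ 2 <> 0 ->
  derivable_pt_lim (fun t => K * (X t * p + Y t * q) / sqrt (X t ^ 2 + Y t ^ 2) ^ 3) x
    (K * ((dX * p + dY * q) / sqrt (X x ^ 2 + Y x ^ 2) ^ 3
          - 3 * (X x * p + Y x * q) * (X x * dX + Y x * dY) / sqrt (X x ^ 2 + Y x ^ 2) ^ 5)).
Proof.
  intros HX HY Hn.
  assert (Hp : 0 < X x ^ 2 + Y x ^ 2) by nra.
  assert (Hr : 0 < sqrt (X x ^ 2 + Y x ^ 2)) by (apply sqrt_lt_R0; auto).
  assert (Hs : sqrt (X x ^ 2 + Y x ^ 2) ^ 2 = X x ^ 2 + Y x ^ 2).
  { apply pow2_sqrt. lra. }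
  eapply dpl_ext; [intros; reflexivity| |].
  2:{ apply dpl_div.
      - apply dpl_mult. apply dpl_const. apply dpl_plus; apply dpl_mult; eauto; apply dpl_const.
      - eapply dpl_ext with (g := comp (fun y => y ^ 3) (fun t => sqrt (X t ^ 2 + Y t ^ 2)));
          [intros; reflexivity| reflexivity |].
        apply derivable_pt_lim_comp. apply dpl_sqrtg. apply dpl_plus; apply dpl_sq; eauto. auto.
        apply derivable_pt_lim_pow.
      - apply Rgt_not_eq; unfold comp; apply pow_lt; auto. }
  unfold comp, Rsqr.
  remember (sqrt (X x ^ 2 + Y x ^ 2)) as r eqn:Er. clear Er. simpl.
  replace (X x * (X x * 1) + Y x * (Y x * 1)) with (r ^ 2) by (rewrite Hs; ring).
  field. lra.
Qed.

Lemma pos_sq a b : a ^ 2 + b ^ 2 <> 0 -> 0 < a ^ 2 + b ^ 2.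
Proof. intros H. destruct (Rle_lt_or_eq_dec 0 (a^2+b^2)); [nra| auto| congruence]. Qed.

Lemma rsum_ext N f g : (forall i, (i < N)%nat -> f i = g i) -> rsum N f = rsum N g.
Proof. induction N; simpl; intros; auto. rewrite IHN, H; auto. Qed.

Lemma rsum_deriv N (f : nat -> R -> R) df x :
  (forall i, (i < N)%nat -> derivable_pt_lim (f i) x (df i)) ->
  derivable_pt_lim (fun t => rsum N (fun i => f i t)) x (rsum N df).
Proof.
  induction N; simpl; intros.
  - apply dpl_const.
  - apply dpl_plus; auto.
Qed.

Lemma upd_same q k a : upd q k (q k) a = q a.
Proof. unfold upd. destruct (Nat.eqb a k) eqn:E; auto. apply Nat.eqb_eq in E; subst; auto. Qed.

Definition G1 n m k (q : nat -> R) := rsum n (fun j => rsum j (fun i =>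
   - (m*m) * ((q i - q j) * (dl k i - dl k j) + (q (i+n)%nat - q (j+n)%nat) * (dl k (i+n) - dl k (j+n)))
   / dist2 n q i j ^ 3)).

Lemma V_deriv n m q k : collision_free n q -> is_partial (Vpot n m) q k (G1 n m k q).
Proof.
  intros Hc. unfold is_partial, Vpot, G1.
  apply rsum_deriv; intros j Hj. apply rsum_deriv; intros i Hi.
  unfold dist2.
  eapply dpl_ext; [intros; reflexivity | |].
  2:{ apply dpl_f1 with (X := fun t => upd q k t i - upd q k t j)
                        (Y := fun t => upd q k t (i+n)%nat - upd q k t (j+n)%nat);
      try (apply dpl_minus; apply dpl_coord).
      rewrite !upd_same. apply Hc; lia. }
  rewrite !upd_same. ring.
Qed.

Definition H2 n m (c : nat -> R) k l := rsum n (fun j => rsum j (fun i =>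
  -(m*m) * (((dl l i - dl l j) * (dl k i - dl k j) + (dl l (i+n) - dl l (j+n)) * (dl k (i+n) - dl k (j+n)))
             / dist2 n c i j ^ 3
     - 3 * ((c i - c j)*(dl k i - dl k j) + (c (i+n)%nat - c (j+n)%nat)*(dl k (i+n) - dl k (j+n)))
         * ((c i - c j) * (dl l i - dl l j) + (c (i+n)%nat - c (j+n)%nat)*(dl l (i+n) - dl l (j+n)))
         / dist2 n c i j ^ 5))).

Lemma G1_deriv n m c k l : collision_free n c ->
  derivable_pt_lim (fun t => G1 n m k (upd c l t)) (c l) (H2 n m c k l).
Proof.
  intros Hc. unfold G1, H2.
  apply rsum_deriv; intros j Hj. apply rsum_deriv; intros i Hi.
  unfold dist2.
  eapply dpl_ext; [intros; reflexivity | |].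
  2:{ apply dpl_f2 with (X := fun t => upd c l t i - upd c l t j)
                        (Y := fun t => upd c l t (i+n)%nat - upd c l t (j+n)%nat);
      try (apply dpl_minus; apply dpl_coord).
      rewrite !upd_same. apply Hc; lia. }
  rewrite !upd_same. field.
  apply Rgt_not_eq, sqrt_lt_R0;
  apply pos_sq, Hc; lia.
Qed.

Lemma dpl_local f g x l d : 0 < d -> (forall t, Rabs (t - x) < d -> f t = g t) ->
  derivable_pt_lim g x l -> derivable_pt_lim f x l.
Proof.
  intros Hd Hfg Hg eps He. destruct (Hg eps He) as [[d' Hd'] H].
  assert (Hm : 0 < Rmin d d') by (apply Rmin_pos; auto).
  exists (mkposreal _ Hm). intros h Hh Hh'. simpl in Hh'.
  assert (E1 : f (x + h) = g (x + h)).
  { apply Hfg. replace (x + h - x) with h by ring. eapply Rlt_le_trans; eauto. apply Rmin_l. }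
  assert (E2 : f x = g x).
  { apply Hfg. replace (x - x) with 0 by ring. rewrite Rabs_R0. auto. }
  rewrite E1, E2. apply H; auto. simpl. eapply Rlt_le_trans; eauto. apply Rmin_r.
Qed.

Lemma fin_delta (N : nat) (Pr : nat -> R -> Prop) :
  (forall i d d', 0 < d' <= d -> Pr i d -> Pr i d') ->
  (forall i, (i < N)%nat -> exists d, 0 < d /\ Pr i d) ->
  exists d, 0 < d /\ forall i, (i < N)%nat -> Pr i d.
Proof.
  intros Hm. induction N; intros H.
  - exists 1; split; [lra | intros; lia].
  - destruct IHN as [d1 [Hd1 H1]]. { intros; apply H; lia. }
    destruct (H N ltac:(lia)) as [d2 [Hd2 H2]].
    exists (Rmin d1 d2). split. apply Rmin_pos; auto.
    intros i Hi. destruct (Nat.eq_dec i N).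
    + subst. eapply Hm; [| apply H2]. split. apply Rmin_pos; auto. apply Rmin_r.
    + eapply Hm; [| apply H1; lia]. split. apply Rmin_pos; auto. apply Rmin_l.
Qed.

Lemma local_pair (c : nat -> R) l a b e f :
  (c a - c b) ^ 2 + (c e - c f) ^ 2 <> 0 ->
  exists d, 0 < d /\ forall t, Rabs (t - c l) < d ->
    (upd c l t a - upd c l t b) ^ 2 + (upd c l t e - upd c l t f) ^ 2 <> 0.
Proof.
  intros Hn.
  set (P := fun t => (upd c l t a - upd c l t b) ^ 2 + (upd c l t e - upd c l t f) ^ 2).
  assert (HP : continuity_pt P (c l)).
  { apply derivable_continuous_pt. eexists. unfold P.
    apply dpl_plus; apply dpl_sq; apply dpl_minus; apply dpl_coord. }
  assert (Hv : P (c l) = (c a - c b) ^ 2 + (c e - c f) ^ 2) by (unfold P; rewrite !upd_same; auto).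
  assert (Hpos : 0 < Rabs (P (c l))) by (apply Rabs_pos_lt; congruence).
  destruct (HP _ Hpos) as [d [Hd H]].
  exists d. split; auto. intros t Ht.
  destruct (Req_dec t (c l)) as [->|Hne].
  - rewrite <- Hv in Hn. exact Hn.
  - intro Hz. assert (H' := H t (conj (conj I (not_eq_sym Hne)) Ht)).
    unfold R_dist in H'. fold (P t) in Hz. rewrite Hz in H'.
    simpl in H'. unfold R_dist in H'. rewrite Rminus_0_l, Rabs_Ropp in H'. lra.
Qed.

Lemma local_cf n (c : nat -> R) l : collision_free n c ->
  exists d, 0 < d /\ forall t, Rabs (t - c l) < d -> collision_free n (upd c l t).
Proof.
  intros Hc.
  destruct (fin_delta n (fun i d => forall j, (j < n)%nat -> i <> j -> forall t, Rabs (t - c l) < d ->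
     (upd c l t i - upd c l t j) ^ 2 + (upd c l t (i+n)%nat - upd c l t (j+n)%nat) ^ 2 <> 0))
    as [d [Hd H]].
  - intros i d d' Hdd Hp j Hj Hij t Ht. apply Hp; auto. lra.
  - intros i Hi.
    destruct (fin_delta n (fun j d => i <> j -> forall t, Rabs (t - c l) < d ->
     (upd c l t i - upd c l t j) ^ 2 + (upd c l t (i+n)%nat - upd c l t (j+n)%nat) ^ 2 <> 0))
    as [d [Hd H]].
    + intros j d d' Hdd Hp Hij t Ht. apply Hp; auto. lra.
    + intros j Hj. destruct (Nat.eq_dec i j).
      * exists 1. split. lra. intros; contradiction.
      * destruct (local_pair c l i j (i+n)%nat (j+n)%nat) as [d [Hd H]].
        apply Hc; auto. exists d; split; auto.
    + exists d. split; auto.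
  - exists d. split; auto. intros t Ht i j Hi Hj Hij. apply H; auto.
Qed.

Section Poly.
Variables cT sT c s cb sb a : R.
Definition cpsi := cT*c - sT*s.
Definition spsi := sT*c + cT*s.
Definition dxp := a*(cT - cpsi).
Definition dyp := a*(sT - spsi).
Definition c2t := cT*cT - sT*sT.
Definition s2t := 2*sT*cT.
Definition Pp := c2t*cb - s2t*sb.
Definition Qp := s2t*cb + c2t*sb.
Definition c2 := c*c - s*s.
Definition s2 := 2*s*c.
Definition Pj := Pp*c2 - Qp*s2.
Definition Qj := Qp*c2 + Pp*s2.
Definition Dxp := Pp - Pj.
Definition Dyp := Qp - Qj.
Definition Np := dxp*Dxp + dyp*Dyp.
Definition R2p := dxp*dxp + dyp*dyp.
Definition Exp := (1/2)*(Pp*(1-c2) + Qp*s2) - 3*sb*s.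
Definition Eyp := (1/2)*(Qp*(1-c2) - Pp*s2) - 3*cb*s.

Lemma polyx : sT*sT + cT*cT - 1 = 0 -> s*s + c*c - 1 = 0 ->
  - (Dxp*R2p - 3*dxp*Np) = Exp * R2p.
Proof.
  intros H1 H2. apply Rminus_diag_uniq.
  transitivity ((sT*sT + cT*cT - 1) * ((3/2)*sT*sT*cb*a*a + (-3)*sT*sT*c*cb*a*a + (3)*sT*sT*c*c*c*cb*a*a + (-3/2)*sT*sT*c*c*c*c*cb*a*a + (-3/2)*sT*sT*s*s*s*s*cb*a*a + (3)*sT*sT*c*s*s*cb*a*a + (6)*sT*sT*c*s*sb*a*a + (-3)*sT*sT*c*c*s*sb*a*a + (3/2)*cT*cT*cb*a*a + (6)*cT*cT*c*s*sb*a*a + (-3)*cT*cT*c*cb*a*a + (3)*cT*cT*c*c*c*cb*a*a + (-3)*cT*cT*c*c*s*sb*a*a + (-3)*cT*cT*s*sb*a*a + (-3)*cT*cT*s*s*s*sb*a*a + (-3/2)*cT*cT*c*c*c*c*cb*a*a + (-3)*cT*cT*c*c*s*s*cb*a*a + (3)*cT*cT*c*s*s*cb*a*a + (-3/2)*cT*cT*s*s*s*s*cb*a*a + (-3)*sT*sT*c*c*s*s*cb*a*a + (-3)*sT*sT*s*sb*a*a + (-3)*sT*sT*s*s*s*sb*a*a + (3/2)*cb*a*a + (-3)*c*cb*a*a + (3)*c*c*c*cb*a*a + (-3/2)*c*c*c*c*cb*a*a + (-3/2)*s*s*s*s*cb*a*a + (3)*c*s*s*cb*a*a + (-3)*c*c*s*s*cb*a*a)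 + (s*s+c*c-1)*((-3/2)*s*s*cb*a*a + (3)*c*cb*a*a + (-3/2)*c*c*cb*a*a + (-3/2)*cb*a*a)).
  - unfold Exp, R2p, Np, Dxp, Dyp, Pj, Qj, Pp, Qp, c2, s2, c2t, s2t, dxp, dyp, cpsi, spsi. field.
  - rewrite H1, H2. ring.
Qed.

Lemma polyy : sT*sT + cT*cT - 1 = 0 -> s*s + c*c - 1 = 0 ->
  - (Dyp*R2p - 3*dyp*Np) = Eyp * R2p.
Proof.
  intros H1 H2. apply Rminus_diag_uniq.
  transitivity ((sT*sT + cT*cT - 1) * ((-3/2)*sT*sT*sb*a*a + (3)*sT*sT*c*sb*a*a + (-3)*sT*sT*c*c*c*sb*a*a + (3/2)*sT*sT*c*c*c*c*sb*a*a + (3/2)*sT*sT*s*s*s*s*sb*a*a + (-3)*sT*sT*c*s*s*sb*a*a + (6)*sT*sT*c*s*cb*a*a + (-3)*sT*sT*c*c*s*cb*a*a + (-3/2)*cT*cT*sb*a*a + (6)*cT*cT*c*s*cb*a*a + (3)*cT*cT*c*sb*a*a + (-3)*cT*cT*c*c*c*sb*a*a + (-3)*cT*cT*c*c*s*cb*a*a + (-3)*cT*cT*s*cb*a*a + (-3)*sT*sT*s*cb*a*a + (-3)*cT*cT*s*s*s*cb*a*a + (-3)*sT*sT*s*s*s*cb*a*a + (3/2)*cT*cT*c*c*c*c*sb*a*a + (3)*cT*cT*c*c*s*s*sb*a*a + (3)*sT*sT*c*c*s*s*sb*a*a + (-3)*cT*cT*c*s*s*sb*a*a + (3/2)*cT*cT*s*s*s*s*sb*a*a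 + (-3/2)*sb*a*a + (3)*c*sb*a*a + (-3)*c*c*c*sb*a*a + (3/2)*c*c*c*c*sb*a*a + (3/2)*s*s*s*s*sb*a*a + (-3)*c*s*s*sb*a*a + (3)*c*c*s*s*sb*a*a) + (s*s+c*c-1)*((3/2)*s*s*sb*a*a + (-3)*c*sb*a*a + (3/2)*c*c*sb*a*a + (3/2)*sb*a*a)).
  - unfold Eyp, R2p, Np, Dxp, Dyp, Pj, Qj, Pp, Qp, c2, s2, c2t, s2t, dxp, dyp, cpsi, spsi. field.
  - rewrite H1, H2. ring.
Qed.

Lemma polyr : sT*sT + cT*cT - 1 = 0 -> s*s + c*c - 1 = 0 ->
  R2p = 2*a*a*(1 - c).
Proof.
  intros H1 H2. apply Rminus_diag_uniq.
  transitivity (a*a*(sT*sT + cT*cT - 1) * (1 - 2*c + c*c + s*s) + a*a*(s*s+c*c-1)).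
  - unfold R2p, dxp, dyp, cpsi, spsi. field.
  - rewrite H1, H2. ring.
Qed.
End Poly.

Lemma rsum_plus N f g : rsum N (fun i => f i + g i) = rsum N f + rsum N g.
Proof. induction N; simpl; [ring| rewrite IHN; ring]. Qed.

Lemma rsum_minus N f g : rsum N (fun i => f i - g i) = rsum N f - rsum N g.
Proof. induction N; simpl; [ring| rewrite IHN; ring]. Qed.

Lemma rsum_scal N a f : rsum N (fun i => a * f i) = a * rsum N f.
Proof. induction N; simpl; [ring| rewrite IHN; ring]. Qed.

Lemma rsum_mulr N a f : rsum N (fun i => f i * a) = rsum N f * a.
Proof. induction N; simpl; [ring| rewrite IHN; ring]. Qed.

Lemma rsum_zero N f : (forall i, (i < N)%nat -> f i = 0) -> rsum N f = 0.
Proof. induction N; simpl; intros; auto. rewrite IHN, H; auto; ring. Qed.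

Lemma rsum_swap N M (g : nat -> nat -> R) :
  rsum N (fun l => rsum M (fun j => g l j)) = rsum M (fun j => rsum N (fun l => g l j)).
Proof.
  induction N; simpl.
  - symmetry; apply rsum_zero; auto.
  - rewrite IHN, <- rsum_plus. reflexivity.
Qed.

Lemma rsum_dl1 N a g : (a < N)%nat -> rsum N (fun l => dl l a * g l) = g a.
Proof.
  induction N; intros H; [lia|]. simpl.
  destruct (Nat.eq_dec a N).
  - subst. rewrite rsum_zero. unfold dl. rewrite Nat.eqb_refl. ring.
    intros i Hi. unfold dl. destruct (Nat.eqb N i) eqn:E; [apply Nat.eqb_eq in E; lia| ring].
  - rewrite IHN by lia. unfold dl. destruct (Nat.eqb a N) eqn:E; [apply Nat.eqb_eq in E; lia| ring].
Qed.

Lemma rsum_dl2 N p g : rsum N (fun i => dl p i * g i) = if Nat.ltb p N then g p else 0.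
Proof.
  induction N; simpl; auto.
  rewrite IHN. unfold dl.
  destruct (Nat.eqb N p) eqn:E1; destruct (Nat.ltb p N) eqn:E2; destruct (Nat.ltb p (S N)) eqn:E3;
  rewrite ?Nat.eqb_eq, ?Nat.eqb_neq, ?Nat.ltb_lt, ?Nat.ltb_ge in *; try lia; subst; ring.
Qed.

Lemma lin_dl N a b e f U V x : (a < N)%nat -> (b < N)%nat -> (e < N)%nat -> (f < N)%nat ->
  rsum N (fun l => ((dl l a - dl l b) * U + (dl l e - dl l f) * V) * x l)
  = U * (x a - x b) + V * (x e - x f).
Proof.
  intros. transitivity (rsum N (fun l => dl l a * (U * x l) - dl l b * (U * x l)
                                     + (dl l e * (V * x l) - dl l f * (V * x l)))).
  - apply rsum_ext; intros; ring.
  - rewrite rsum_plus, !rsum_minus, !rsum_dl1 by auto. ring.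
Qed.

Definition Xx n m (c x : nat -> R) i j := -(m*m) * ((x i - x j) / dist2 n c i j ^ 3
  - 3 * (c i - c j) * ((c i - c j) * (x i - x j) + (c (i+n)%nat - c (j+n)%nat) * (x (i+n)%nat - x (j+n)%nat))
    / dist2 n c i j ^ 5).
Definition Xy n m (c x : nat -> R) i j := -(m*m) * ((x (i+n)%nat - x (j+n)%nat) / dist2 n c i j ^ 3
  - 3 * (c (i+n)%nat - c (j+n)%nat) * ((c i - c j) * (x i - x j) + (c (i+n)%nat - c (j+n)%nat) * (x (i+n)%nat - x (j+n)%nat))
    / dist2 n c i j ^ 5).

Lemma red n m c x k :
  rsum (2*n) (fun l => H2 n m c k l * x l) =
  rsum n (fun j => rsum j (fun i => (dl k i - dl k j) * Xx n m c x i j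
                                  + (dl k (i+n) - dl k (j+n)) * Xy n m c x i j)).
Proof.
  unfold H2.
  transitivity (rsum (2*n) (fun l => rsum n (fun j => rsum j (fun i =>
    (-(m*m) * (((dl l i - dl l j) * (dl k i - dl k j) + (dl l (i+n) - dl l (j+n)) * (dl k (i+n) - dl k (j+n)))
             / dist2 n c i j ^ 3
     - 3 * ((c i - c j)*(dl k i - dl k j) + (c (i+n)%nat - c (j+n)%nat)*(dl k (i+n) - dl k (j+n)))
         * ((c i - c j) * (dl l i - dl l j) + (c (i+n)%nat - c (j+n)%nat)*(dl l (i+n) - dl l (j+n)))
         / dist2 n c i j ^ 5)) * x l)))).
  { apply rsum_ext; intros l _. rewrite <- rsum_mulr. apply rsum_ext; intros j _.
    rewrite <- rsum_mulr. reflexivity. }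
  rewrite rsum_swap. apply rsum_ext; intros j Hj. rewrite rsum_swap. apply rsum_ext; intros i Hi.
  set (r := dist2 n c i j).
  set (dx := c i - c j). set (dy := c (i+n)%nat - c (j+n)%nat).
  set (Nk := dx * (dl k i - dl k j) + dy * (dl k (i+n) - dl k (j+n))).
  transitivity (rsum (2*n) (fun l => ((dl l i - dl l j) * (-(m*m) * ((dl k i - dl k j)/r^3 - 3*Nk*dx/r^5))
      + (dl l (i+n) - dl l (j+n)) * (-(m*m) * ((dl k (i+n) - dl k (j+n))/r^3 - 3*Nk*dy/r^5))) * x l)).
  { apply rsum_ext; intros l _. unfold Nk, Rdiv. ring. }
  rewrite lin_dl by lia. unfold Xx, Xy. fold r dx dy. unfold Nk, Rdiv. ring.
Qed.

Definition Ang n a := 2 * PI * INR a / INR n.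

Lemma rsum_split a b f : rsum (a + b) f = rsum a f + rsum b (fun e => f (a + e)%nat).
Proof.
  induction b; simpl.
  - rewrite Nat.add_0_r. ring.
  - rewrite Nat.add_succ_r. simpl. rewrite IHb. ring.
Qed.

Lemma rsum_if n p g : (p < n)%nat ->
  rsum n (fun j => if Nat.ltb p j then g j else 0) = rsum (n - 1 - p) (fun e => g (p + 1 + e)%nat).
Proof.
  intros H. replace n with ((p + 1) + (n - 1 - p))%nat at 1 by lia.
  rewrite rsum_split. rewrite rsum_zero.
  - rewrite Rplus_0_l. apply rsum_ext; intros e _.
    destruct (Nat.ltb p (p + 1 + e)) eqn:E; auto. apply Nat.ltb_ge in E; lia.
  - intros i Hi. destruct (Nat.ltb p i) eqn:E; auto. apply Nat.ltb_lt in E; lia.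
Qed.

Lemma pair_sym n p X : (p < n)%nat -> (forall i j, (i < n)%nat -> (j < n)%nat -> X j i = - X i j) ->
  rsum n (fun j => rsum j (fun i => (dl p i - dl p j) * X i j))
  = rsum n (fun j => if Nat.ltb p j then X p j else 0) + rsum p (fun i => X p i).
Proof.
  intros Hp Ha.
  transitivity (rsum n (fun j => rsum j (fun i => dl p i * X i j) - dl p j * rsum j (fun i => X i j))).
  { apply rsum_ext; intros j _. rewrite <- rsum_scal, <- rsum_minus. apply rsum_ext; intros; ring. }
  rewrite rsum_minus.
  assert (E1 : rsum n (fun j => rsum j (fun i => dl p i * X i j)) = rsum n (fun j => if Nat.ltb p j then X p j else 0)).
  { apply rsum_ext; intros j _. exact (rsum_dl2 j p (fun i => X i j)). }
  assert (E2 : rsum n (fun j => dl p j * rsum j (fun i => X i j)) = - rsum p (fun i => X p i)).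
  { rewrite (rsum_dl2 n p (fun j => rsum j (fun i => X i j))). assert (Hp' := Hp). apply Nat.ltb_lt in Hp'. rewrite Hp'.
    rewrite <- (Rmult_1_l (rsum p (fun i => X p i))), Ropp_mult_distr_l, <- rsum_scal.
    apply rsum_ext; intros i Hi. rewrite Ha by lia. ring. }
  rewrite E1, E2. ring.
Qed.

Lemma pair_sum n p X (F : R -> R) : (p < n)%nat ->
  (forall i j, (i < n)%nat -> (j < n)%nat -> X j i = - X i j) ->
  (forall j, (j < n)%nat -> X p j = F (Ang n j)) ->
  (forall y, F (y + 2 * PI) = F y) ->
  rsum n (fun j => rsum j (fun i => (dl p i - dl p j) * X i j))
  = rsum (n - 1) (fun e => F (Ang n p + 2 * PI * INR (S e) / INR n)).
Proof.
  intros Hp Ha HX HF.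
  assert (Hn : INR n <> 0) by (apply not_0_INR; lia).
  rewrite pair_sym by auto. rewrite rsum_if by auto.
  assert (Hs : forall f, rsum (n - 1) f = rsum (n - 1 - p) f + rsum p (fun e => f (n - 1 - p + e)%nat)).
  { intros f. rewrite <- rsum_split. f_equal. lia. }
  rewrite Hs. f_equal.
  - apply rsum_ext; intros e He. rewrite HX by lia. f_equal.
    unfold Ang. rewrite !plus_INR, !S_INR; simpl (INR 0); field; auto.
  - apply rsum_ext; intros e He. rewrite HX by lia. rewrite <- HF. f_equal.
    unfold Ang.
    assert (E : INR (S (n - 1 - p + e)) = INR n - INR p + INR e).
    { replace (S (n - 1 - p + e)) with ((n + e) - p)%nat by lia.
      rewrite minus_INR by lia. rewrite plus_INR. ring. }
    rewrite E. field. auto.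
Qed.

Definition rr a th ps := sqrt ((a * cos th - a * cos ps) ^ 2 + (a * sin th - a * sin ps) ^ 2).
Definition rho a ph := sqrt (2 * a * a * (1 - cos ph)).

Definition Phx m a b th ps := -(m*m) * ((cos (2*th+b) - cos (2*ps+b)) / rr a th ps ^ 3
  - 3 * (a * cos th - a * cos ps) * ((a * cos th - a * cos ps) * (cos (2*th+b) - cos (2*ps+b))
        + (a * sin th - a * sin ps) * (sin (2*th+b) - sin (2*ps+b))) / rr a th ps ^ 5).
Definition Phy m a b th ps := -(m*m) * ((sin (2*th+b) - sin (2*ps+b)) / rr a th ps ^ 3
  - 3 * (a * sin th - a * sin ps) * ((a * cos th - a * cos ps) * (cos (2*th+b) - cos (2*ps+b))
        + (a * sin th - a * sin ps) * (sin (2*th+b) - sin (2*ps+b))) / rr a th ps ^ 5).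
Definition Phd m a th ps := -(m*m) * ((a * cos th - a * cos ps) / rr a th ps ^ 3).

Lemma gen_dec (Dx Dy dx dy E mm a c : R) : 0 < a -> c < 1 ->
  -(Dx*(dx*dx+dy*dy) - 3*dx*(dx*Dx+dy*Dy)) = E*(dx*dx+dy*dy) ->
  dx*dx+dy*dy = 2*a*a*(1-c) ->
  -(mm) * (Dx / sqrt (dx^2+dy^2) ^ 3 - 3*dx*(dx*Dx+dy*Dy) / sqrt (dx^2+dy^2) ^ 5)
  = mm * (E / sqrt (2*a*a*(1-c)) ^ 3).
Proof.
  intros Ha Hc Hid HR.
  replace (dx^2+dy^2) with (2*a*a*(1-c)) by (rewrite <- HR; ring).
  assert (Hp : 0 < 2*a*a*(1-c)) by (apply Rmult_lt_0_compat; [nra| lra]).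
  assert (Hr : 0 < sqrt (2*a*a*(1-c))) by (apply sqrt_lt_R0; auto).
  assert (Hr2 : sqrt (2*a*a*(1-c)) ^ 2 = dx*dx+dy*dy) by (rewrite pow2_sqrt; lra).
  remember (sqrt (2*a*a*(1-c))) as r eqn:Er. clear Er.
  rewrite <- Hr2 in Hid.
  assert (H3 : 3*dx*(dx*Dx+dy*Dy) = E*r^2 + Dx*r^2) by lra.
  rewrite H3. field. lra.
Qed.

Lemma cos_lt1 ph : cos ph < 1 -> 0 < 1 - cos ph.
Proof. lra. Qed.

Lemma trig_atoms th ph b :
  cos (th + ph) = cos th * cos ph - sin th * sin ph /\
  sin (th + ph) = sin th * cos ph + cos th * sin ph /\
  cos (2*th + b) = (cos th * cos th - sin th * sin th) * cos b - 2 * sin th * cos th * sin b /\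
  sin (2*th + b) = 2 * sin th * cos th * cos b + (cos th * cos th - sin th * sin th) * sin b /\
  cos (2*(th+ph) + b) = ((cos th * cos th - sin th * sin th) * cos b - 2 * sin th * cos th * sin b) * (cos ph * cos ph - sin ph * sin ph)
      - (2 * sin th * cos th * cos b + (cos th * cos th - sin th * sin th) * sin b) * (2 * sin ph * cos ph) /\
  sin (2*(th+ph) + b) = (2 * sin th * cos th * cos b + (cos th * cos th - sin th * sin th) * sin b) * (cos ph * cos ph - sin ph * sin ph)
      + ((cos th * cos th - sin th * sin th) * cos b - 2 * sin th * cos th * sin b) * (2 * sin ph * cos ph) /\
  cos (2*ph) = cos ph * cos ph - sin ph * sin ph /\
  sin (2*ph) = 2 * sin ph * cos ph.
Proof.
  replace (2*(th+ph)+b) with ((2*th+b) + 2*ph) by ring.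
  rewrite !cos_plus, !sin_plus, !cos_2a, !sin_2a.
  repeat split; repeat (rewrite ?cos_plus, ?sin_plus, ?cos_2a, ?sin_2a); ring.
Qed.

Lemma Phx_dec m a b th ph : 0 < a -> cos ph < 1 ->
  Phx m a b th (th + ph) = m*m * (((1/2)*(cos (2*th+b) * (1 - cos (2*ph)) + sin (2*th+b) * sin (2*ph))
                                   - 3 * sin b * sin ph) / rho a ph ^ 3).
Proof.
  intros Ha Hc. unfold Phx, rr, rho.
  destruct (trig_atoms th ph b) as (E1 & E2 & E3 & E4 & E5 & E6 & E7 & E8).
  rewrite E1, E2, E3, E4, E5, E6, E7, E8.
  assert (H1 : sin th * sin th + cos th * cos th - 1 = 0) by (rewrite <- !Rsqr_def, sin2_cos2; ring).
  assert (H2 : sin ph * sin ph + cos ph * cos ph - 1 = 0) by (rewrite <- !Rsqr_def, sin2_cos2; ring).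
  set (cT := cos th) in *. set (sT := sin th) in *. set (c := cos ph) in *. set (s := sin ph) in *.
  set (cb := cos b) in *. set (sb := sin b) in *.
  apply gen_dec; auto.
  - assert (HP := polyx cT sT c s cb sb a H1 H2).
    unfold Exp, R2p, Np, Dxp, Dyp, Pj, Qj, Pp, Qp, c2, s2, c2t, s2t, dxp, dyp, cpsi, spsi in HP.
    apply Rminus_diag_uniq. apply Rminus_diag_eq in HP. rewrite <- HP. field.
  - assert (HP := polyr cT sT c s a H1 H2).
    unfold R2p, dxp, dyp, cpsi, spsi in HP. rewrite <- HP. ring.
Qed.

Lemma gen_decy (Dx Dy dx dy E mm a c : R) : 0 < a -> c < 1 ->
  -(Dy*(dx*dx+dy*dy) - 3*dy*(dx*Dx+dy*Dy)) = E*(dx*dx+dy*dy) ->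
  dx*dx+dy*dy = 2*a*a*(1-c) ->
  -(mm) * (Dy / sqrt (dx^2+dy^2) ^ 3 - 3*dy*(dx*Dx+dy*Dy) / sqrt (dx^2+dy^2) ^ 5)
  = mm * (E / sqrt (2*a*a*(1-c)) ^ 3).
Proof.
  intros Ha Hc Hid HR.
  replace (dx^2+dy^2) with (2*a*a*(1-c)) by (rewrite <- HR; ring).
  assert (Hp : 0 < 2*a*a*(1-c)) by (apply Rmult_lt_0_compat; [nra| lra]).
  assert (Hr : 0 < sqrt (2*a*a*(1-c))) by (apply sqrt_lt_R0; auto).
  assert (Hr2 : sqrt (2*a*a*(1-c)) ^ 2 = dx*dx+dy*dy) by (rewrite pow2_sqrt; lra).
  remember (sqrt (2*a*a*(1-c))) as r eqn:Er. clear Er.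
  rewrite <- Hr2 in Hid.
  assert (H3 : 3*dy*(dx*Dx+dy*Dy) = E*r^2 + Dy*r^2) by lra.
  rewrite H3. field. lra.
Qed.

Lemma Phy_dec m a b th ph : 0 < a -> cos ph < 1 ->
  Phy m a b th (th + ph) = m*m * (((1/2)*(sin (2*th+b) * (1 - cos (2*ph)) - cos (2*th+b) * sin (2*ph))
                                   - 3 * cos b * sin ph) / rho a ph ^ 3).
Proof.
  intros Ha Hc. unfold Phy, rr, rho.
  destruct (trig_atoms th ph b) as (E1 & E2 & E3 & E4 & E5 & E6 & E7 & E8).
  rewrite E1, E2, E3, E4, E5, E6, E7, E8.
  assert (H1 : sin th * sin th + cos th * cos th - 1 = 0) by (rewrite <- !Rsqr_def, sin2_cos2; ring).
  assert (H2 : sin ph * sin ph + cos ph * cos ph - 1 = 0) by (rewrite <- !Rsqr_def, sin2_cos2; ring).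
  set (cT := cos th) in *. set (sT := sin th) in *. set (c := cos ph) in *. set (s := sin ph) in *.
  set (cb := cos b) in *. set (sb := sin b) in *.
  apply gen_decy; auto.
  - assert (HP := polyy cT sT c s cb sb a H1 H2).
    unfold Eyp, R2p, Np, Dxp, Dyp, Pj, Qj, Pp, Qp, c2, s2, c2t, s2t, dxp, dyp, cpsi, spsi in HP.
    apply Rminus_diag_uniq. apply Rminus_diag_eq in HP. rewrite <- HP. field.
  - assert (HP := polyr cT sT c s a H1 H2).
    unfold R2p, dxp, dyp, cpsi, spsi in HP. rewrite <- HP. ring.
Qed.

Lemma Phd_dec m a th ph : 0 < a -> cos ph < 1 ->
  Phd m a th (th + ph) = -(m*m) * (a * (cos th * (1 - cos ph) + sin th * sin ph) / rho a ph ^ 3).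
Proof.
  intros Ha Hc. unfold Phd, rr, rho.
  destruct (trig_atoms th ph 0) as (E1 & E2 & _).
  rewrite E1, E2.
  assert (H1 : sin th * sin th + cos th * cos th - 1 = 0) by (rewrite <- !Rsqr_def, sin2_cos2; ring).
  assert (H2 : sin ph * sin ph + cos ph * cos ph - 1 = 0) by (rewrite <- !Rsqr_def, sin2_cos2; ring).
  assert (HP := polyr (cos th) (sin th) (cos ph) (sin ph) a H1 H2).
  unfold R2p, dxp, dyp, cpsi, spsi in HP.
  replace ((a * cos th - a * (cos th * cos ph - sin th * sin ph)) ^ 2 +
      (a * sin th - a * (sin th * cos ph + cos th * sin ph)) ^ 2) with (2 * a * a * (1 - cos ph))
    by (rewrite <- HP; ring).
  f_equal. unfold Rdiv. f_equal. ring.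
Qed.

Lemma rsum_shift N f : rsum (S N) f = f O + rsum N (fun e => f (S e)).
Proof. induction N; simpl in *; [ring|]. rewrite IHN. ring. Qed.

Lemma rsum_rev N f : rsum N f = rsum N (fun e => f (N - 1 - e)%nat).
Proof.
  induction N; auto.
  change (rsum (S N) f) with (rsum N f + f N).
  rewrite (rsum_shift N (fun e => f (S N - 1 - e)%nat)). rewrite IHN.
  replace (S N - 1 - 0)%nat with N by lia. rewrite Rplus_comm. f_equal.
  apply rsum_ext; intros e He. f_equal. lia.
Qed.

Lemma rsum_opp N f : rsum N (fun i => - f i) = - rsum N f.
Proof. induction N; simpl; [ring| rewrite IHN; ring]. Qed.

Definition tt n e := PI * INR (S e) / INR n.

Lemma tt_range n e : (e < n - 1)%nat -> 0 < tt n e < PI.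
Proof.
  intros H. unfold tt.
  assert (Hn : 0 < INR n) by (apply lt_0_INR; lia).
  assert (Hs : INR (S e) < INR n) by (apply lt_INR; lia).
  assert (Hs0 : 0 < INR (S e)) by (apply lt_0_INR; lia).
  split.
  - apply Rdiv_lt_0_compat; auto. apply Rmult_lt_0_compat; auto. apply PI_RGT_0.
  - apply Rmult_lt_reg_r with (INR n); auto. unfold Rdiv. rewrite Rmult_assoc, Rinv_l by lra.
    rewrite Rmult_1_r. apply Rmult_lt_compat_l. apply PI_RGT_0. auto.
Qed.

Lemma sin_tt_pos n e : (e < n - 1)%nat -> 0 < sin (tt n e).
Proof. intros H. apply sin_gt_0; apply tt_range; auto. Qed.

Lemma cos2_lt1 t : 0 < sin t -> cos (2 * t) < 1.
Proof. intros H. rewrite cos_2a_sin. nra. Qed.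

Lemma rho2 a t : 0 < a -> 0 < sin t -> rho a (2 * t) = 2 * a * sin t.
Proof.
  intros Ha Hs. unfold rho. rewrite cos_2a_sin.
  replace (2 * a * a * (1 - (1 - 2 * sin t * sin t))) with ((2 * a * sin t) ^ 2) by ring.
  apply sqrt_pow2. nra.
Qed.

Lemma Ev_val a t : 0 < a -> 0 < sin t ->
  (1 - cos (2 * (2 * t))) / rho a (2 * t) ^ 3 = (/ sin t - sin t) / a ^ 3.
Proof.
  intros Ha Hs. rewrite rho2 by auto. rewrite cos_2a_sin, sin_2a.
  assert (Hc : cos t * cos t = 1 - sin t * sin t) by (rewrite <- !Rsqr_def; rewrite <- (sin2_cos2 t); ring).
  replace ((1 - (1 - 2 * (2 * sin t * cos t) * (2 * sin t * cos t)))) with (8 * sin t * sin t * (cos t * cos t)) by ring. rewrite Hc. field. split; lra.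
Qed.

Lemma Ed_val a t : 0 < a -> 0 < sin t ->
  (1 - cos (2 * t)) / rho a (2 * t) ^ 3 = / (4 * a ^ 3) * / sin t.
Proof.
  intros Ha Hs. rewrite rho2 by auto. rewrite cos_2a_sin. field. split; lra.
Qed.

Lemma odd_sum n (g : R -> R) : (1 <= n)%nat ->
  (forall x, g (2 * PI - x) = - g x) ->
  rsum (n - 1) (fun e => g (2 * tt n e)) = 0.
Proof.
  intros Hn Hg.
  assert (HnR : INR n <> 0) by (apply not_0_INR; lia).
  assert (E : rsum (n - 1) (fun e => g (2 * tt n e)) = - rsum (n - 1) (fun e => g (2 * tt n e))).
  { rewrite rsum_rev at 1. rewrite <- rsum_opp.
    apply rsum_ext; intros e He.
    replace (2 * tt n (n - 1 - 1 - e)) with (2 * PI - 2 * tt n e).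
    - rewrite Hg. ring.
    - unfold tt. replace (INR (S (n - 1 - 1 - e))) with (INR n - INR (S e)).
      + field. auto.
      + rewrite <- minus_INR by lia. f_equal. lia. }
  lra.
Qed.

Lemma tele N x : 2 * sin (x / 2) * rsum N (fun e => sin (INR (S e) * x))
  = cos (x / 2) - cos ((INR N + 1 / 2) * x).
Proof.
  induction N.
  - simpl. replace ((0 + 1/2) * x) with (x / 2) by field. ring.
  - change (rsum (S N) ?f) with (rsum N f + f N). cbv beta. rewrite Rmult_plus_distr_l, IHN.
    assert (Hp : forall A B, 2 * sin A * sin B = cos (B - A) - cos (B + A)).
    { intros A B. rewrite cos_minus, cos_plus. ring. }
    rewrite Hp. rewrite !S_INR.
    replace ((INR N + 1) * x - x / 2) with ((INR N + 1/2) * x) by field.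
    replace ((INR N + 1) * x + x / 2) with ((INR N + 1 + 1/2) * x) by field.
    ring.
Qed.

Lemma Ssin_val n : (2 <= n)%nat ->
  rsum (n - 1) (fun e => sin (tt n e)) = sin (PI / INR n) / (1 - cos (PI / INR n)).
Proof.
  intros Hn.
  assert (HnR : 0 < INR n) by (apply lt_0_INR; lia).
  set (x := PI / INR n).
  assert (Hx : 0 < x / 2 < PI).
  { unfold x. split. apply Rdiv_lt_0_compat; [|lra]. apply Rdiv_lt_0_compat; auto. apply PI_RGT_0.
    assert (1 <= INR n) by (replace 1 with (INR 1) by reflexivity; apply le_INR; lia).
    assert (0 < PI) by apply PI_RGT_0.
    assert (PI / INR n <= PI).
    { apply Rmult_le_reg_r with (INR n); [lra|]. unfold Rdiv. rewrite Rmult_assoc, Rinv_l by lra. nra. }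
    lra. }
  assert (Hs : 0 < sin (x / 2)) by (apply sin_gt_0; lra).
  assert (Ht := tele (n - 1) x).
  replace (rsum (n - 1) (fun e => sin (INR (S e) * x))) with (rsum (n - 1) (fun e => sin (tt n e))) in Ht.
  2:{ apply rsum_ext; intros e _. unfold tt, x. f_equal. field. lra. }
  replace ((INR (n - 1) + 1 / 2) * x) with (PI - x / 2) in Ht.
  2:{ rewrite minus_INR by lia. unfold x. simpl INR. field. lra. }
  rewrite Rtrigo_facts.cos_pi_minus in Ht.
  assert (Ex : x = 2 * (x / 2)) by field. rewrite Ex.
  rewrite sin_2a, cos_2a_sin.
  apply Rmult_eq_reg_l with (2 * sin (x / 2)); [| lra].
  rewrite Ht. field. nra.
Qed.

Definition wv n b a := if Nat.ltb a n then cos (2 * Ang n a + b) else sin (2 * Ang n (a - n) + b).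

Lemma ngon_lo n al a : (a < n)%nat -> ngon n al a = al * cos (Ang n a).
Proof. intros H; unfold ngon, Ang; rewrite (proj2 (Nat.ltb_lt _ _) H); reflexivity. Qed.
Lemma ngon_hi n al a : ngon n al (a + n) = al * sin (Ang n a).
Proof. unfold ngon, Ang. destruct (Nat.ltb (a+n) n) eqn:E; [apply Nat.ltb_lt in E; lia|].
  replace (a+n-n)%nat with a by lia. reflexivity. Qed.
Lemma wv_lo n b a : (a < n)%nat -> wv n b a = cos (2 * Ang n a + b).
Proof. intros H; unfold wv; rewrite (proj2 (Nat.ltb_lt _ _) H); reflexivity. Qed.
Lemma wv_hi n b a : wv n b (a + n) = sin (2 * Ang n a + b).
Proof. unfold wv. destruct (Nat.ltb (a+n) n) eqn:E; [apply Nat.ltb_lt in E; lia|].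
  replace (a+n-n)%nat with a by lia. reflexivity. Qed.

Definition Xd n m (c : nat -> R) i j := -(m*m) * ((c i - c j) / dist2 n c i j ^ 3).

Lemma dist2_sym n c i j : dist2 n c j i = dist2 n c i j.
Proof. unfold dist2. f_equal. ring. Qed.

Lemma Xx_anti n m c x i j : Xx n m c x j i = - Xx n m c x i j.
Proof. unfold Xx. rewrite dist2_sym. unfold Rdiv. ring. Qed.
Lemma Xy_anti n m c x i j : Xy n m c x j i = - Xy n m c x i j.
Proof. unfold Xy. rewrite dist2_sym. unfold Rdiv. ring. Qed.
Lemma Xd_anti n m c i j : Xd n m c j i = - Xd n m c i j.
Proof. unfold Xd. rewrite dist2_sym. unfold Rdiv. ring. Qed.

Lemma Xx_Phx n m al b p j : (p < n)%nat -> (j < n)%nat ->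
  Xx n m (ngon n al) (wv n b) p j = Phx m al b (Ang n p) (Ang n j).
Proof. intros. unfold Xx, Phx, rr, dist2. rewrite !ngon_hi, !wv_hi, !ngon_lo, !wv_lo by auto. reflexivity. Qed.
Lemma Xy_Phy n m al b p j : (p < n)%nat -> (j < n)%nat ->
  Xy n m (ngon n al) (wv n b) p j = Phy m al b (Ang n p) (Ang n j).
Proof. intros. unfold Xy, Phy, rr, dist2. rewrite !ngon_hi, !wv_hi, !ngon_lo, !wv_lo by auto. reflexivity. Qed.
Lemma Xd_Phd n m al p j : (p < n)%nat -> (j < n)%nat ->
  Xd n m (ngon n al) p j = Phd m al (Ang n p) (Ang n j).
Proof. intros. unfold Xd, Phd, rr, dist2. rewrite !ngon_hi, !ngon_lo by auto. reflexivity. Qed.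

Lemma per1 ps : cos (ps + 2 * PI) = cos ps /\ sin (ps + 2 * PI) = sin ps.
Proof. replace (ps + 2 * PI) with (ps + 2 * INR 1 * PI) by (simpl; ring).
  split; [apply cos_period | apply sin_period]. Qed.
Lemma per2 ps b : cos (2 * (ps + 2 * PI) + b) = cos (2 * ps + b) /\ sin (2 * (ps + 2 * PI) + b) = sin (2 * ps + b).
Proof. replace (2 * (ps + 2 * PI) + b) with ((2 * ps + b) + 2 * INR 2 * PI) by (simpl; ring).
  split; [apply cos_period | apply sin_period]. Qed.

Lemma Phx_per m al b th ps : Phx m al b th (ps + 2 * PI) = Phx m al b th ps.
Proof. unfold Phx, rr. destruct (per1 ps) as [-> ->]. destruct (per2 ps b) as [-> ->]. reflexivity. Qed.
Lemma Phy_per m al b th ps : Phy m al b th (ps + 2 * PI) = Phy m al b th ps.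
Proof. unfold Phy, rr. destruct (per1 ps) as [-> ->]. destruct (per2 ps b) as [-> ->]. reflexivity. Qed.
Lemma Phd_per m al th ps : Phd m al th (ps + 2 * PI) = Phd m al th ps.
Proof. unfold Phd, rr. destruct (per1 ps) as [-> ->]. reflexivity. Qed.

Lemma dl_shift p n i : dl (p + n) (i + n) = dl p i.
Proof. unfold dl. destruct (Nat.eqb (i+n) (p+n)) eqn:E1; destruct (Nat.eqb i p) eqn:E2; auto;
  rewrite ?Nat.eqb_eq, ?Nat.eqb_neq in *; lia. Qed.
Lemma dl_ne k a : a <> k -> dl k a = 0.
Proof. intros. unfold dl. destruct (Nat.eqb a k) eqn:E; auto. apply Nat.eqb_eq in E; lia. Qed.

Lemma rho_refl al x : rho al (2 * PI - x) = rho al x.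
Proof. unfold rho. replace (2 * PI - x) with (- x + 2 * INR 1 * PI) by (simpl; ring).
  rewrite cos_period, cos_neg. reflexivity. Qed.

Lemma O1_odd al x : sin (2 * PI - x) / rho al (2 * PI - x) ^ 3 = - (sin x / rho al x ^ 3).
Proof. rewrite rho_refl. replace (2 * PI - x) with (- x + 2 * INR 1 * PI) by (simpl; ring).
  rewrite sin_period, sin_neg. unfold Rdiv. ring. Qed.
Lemma O2_odd al x : sin (2 * (2 * PI - x)) / rho al (2 * PI - x) ^ 3 = - (sin (2 * x) / rho al x ^ 3).
Proof. rewrite rho_refl. replace (2 * (2 * PI - x)) with (- (2 * x) + 2 * INR 2 * PI) by (simpl; ring).
  rewrite sin_period, sin_neg. unfold Rdiv. ring. Qed.

Definition Sinv n := rsum (n - 1) (fun e => / sin (tt n e)).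
Definition Ssin n := rsum (n - 1) (fun e => sin (tt n e)).

Lemma rsum_pos N f : (1 <= N)%nat -> (forall i, (i < N)%nat -> 0 < f i) -> 0 < rsum N f.
Proof.
  induction N; intros H Hf; [lia|]. simpl.
  destruct N. simpl. rewrite Rplus_0_l. apply Hf; lia.
  assert (0 < rsum (S N) f) by (apply IHN; intros; [lia| apply Hf; lia]).
  assert (0 < f (S N)) by (apply Hf; lia). lra.
Qed.

Lemma Sinv_pos n : (2 <= n)%nat -> 0 < Sinv n.
Proof. intros. unfold Sinv. apply rsum_pos; [lia|]. intros. apply Rinv_0_lt_compat, sin_tt_pos; auto. Qed.

Lemma lambda_eq n : (2 <= n)%nat -> lambda14 n = 2 - 2 * Ssin n / Sinv n.
Proof. intros. unfold lambda14, Ssin, Sinv. rewrite Ssin_val by auto. unfold tt. unfold Rdiv. ring. Qed.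

Lemma ang2 n e : (1 <= n)%nat -> 2 * PI * INR (S e) / INR n = 2 * tt n e.
Proof. intros. unfold tt. field. apply not_0_INR. lia. Qed.

Lemma sqdist al A ph : (al*cos A - al*cos (A+ph))^2 + (al*sin A - al*sin (A+ph))^2 = 2*al*al*(1 - cos ph).
Proof.
  destruct (trig_atoms A ph 0) as (E1 & E2 & _). rewrite E1, E2.
  assert (H1 : sin A * sin A + cos A * cos A - 1 = 0) by (rewrite <- !Rsqr_def, sin2_cos2; ring).
  assert (H2 : sin ph * sin ph + cos ph * cos ph - 1 = 0) by (rewrite <- !Rsqr_def, sin2_cos2; ring).
  assert (HP := polyr (cos A) (sin A) (cos ph) (sin ph) al H1 H2).
  unfold R2p, dxp, dyp, cpsi, spsi in HP. rewrite <- HP. ring.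
Qed.

Lemma ngon_pair n al i j : (2 <= n)%nat -> 0 < al -> (i < j)%nat -> (j < n)%nat ->
  0 < (al * cos (Ang n i) - al * cos (Ang n j))^2 + (al * sin (Ang n i) - al * sin (Ang n j))^2.
Proof.
  intros Hn Ha Hij Hj.
  assert (HnR : 0 < INR n) by (apply lt_0_INR; lia).
  set (t := PI * INR (j - i) / INR n).
  assert (Et : Ang n j = Ang n i + 2 * t).
  { unfold t, Ang. rewrite minus_INR by lia. field. lra. }
  assert (Ht : 0 < t < PI).
  { unfold t.
    assert (Hs : INR (j - i) < INR n) by (apply lt_INR; lia).
    assert (Hs0 : 0 < INR (j - i)) by (apply lt_0_INR; lia).
    assert (0 < PI) by apply PI_RGT_0.
    split.
    - apply Rdiv_lt_0_compat; auto. apply Rmult_lt_0_compat; auto.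
    - apply Rmult_lt_reg_r with (INR n); auto. unfold Rdiv. rewrite Rmult_assoc, Rinv_l by lra.
      rewrite Rmult_1_r. apply Rmult_lt_compat_l; auto. }
  rewrite Et, sqdist.
  assert (cos (2 * t) < 1) by (apply cos2_lt1, sin_gt_0; lra).
  apply Rmult_lt_0_compat; [nra | lra].
Qed.

Lemma ngon_cf n al : (2 <= n)%nat -> 0 < al -> collision_free n (ngon n al).
Proof.
  intros Hn Ha i j Hi Hj Hij. rewrite !ngon_hi, !ngon_lo by auto.
  destruct (Nat.lt_gt_cases i j) as [[Hl|Hl] _]; [lia | |].
  - apply Rgt_not_eq. apply ngon_pair; auto.
  - apply Rgt_not_eq. apply Rlt_gt.
    replace ((al * cos (Ang n i) - al * cos (Ang n j)) ^ 2 + (al * sin (Ang n i) - al * sin (Ang n j)) ^ 2)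
      with ((al * cos (Ang n j) - al * cos (Ang n i)) ^ 2 + (al * sin (Ang n j) - al * sin (Ang n i)) ^ 2) by ring.
    apply ngon_pair; auto.
Qed.

Lemma Ang0 n : Ang n 0 = 0.
Proof. unfold Ang. simpl INR. unfold Rdiv. ring. Qed.

Lemma darboux n m al : (2 <= n)%nat -> 0 < m -> 0 < al ->
  G1 n m 0 (ngon n al) = - (m * ngon n al 0) -> m * Sinv n = 4 * al ^ 3.
Proof.
  intros Hn Hm Ha HG.
  assert (E1 : G1 n m 0 (ngon n al) = rsum n (fun j => rsum j (fun i => (dl 0 i - dl 0 j) * Xd n m (ngon n al) i j))).
  { unfold G1, Xd. apply rsum_ext; intros j Hj. apply rsum_ext; intros i Hi.
    rewrite (dl_ne 0 (i+n)), (dl_ne 0 (j+n)) by lia. unfold Rdiv. ring. }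
  rewrite (pair_sum n 0 _ (Phd m al (Ang n 0))) in E1 by
    (try lia; intros; try apply Xd_anti; try apply Xd_Phd; try lia; apply Phd_per).
  assert (E2 : rsum (n - 1) (fun e => Phd m al (Ang n 0) (Ang n 0 + 2 * PI * INR (S e) / INR n))
              = -(m*m) * al * / (4 * al ^ 3) * Sinv n).
  { unfold Sinv. rewrite <- rsum_scal. apply rsum_ext; intros e He.
    rewrite ang2 by lia. assert (Hs := sin_tt_pos n e He).
    rewrite Phd_dec by (auto; apply cos2_lt1; auto).
    rewrite Ang0, cos_0, sin_0.
    replace (-(m*m) * (al * (1 * (1 - cos (2 * tt n e)) + 0 * sin (2 * tt n e)) / rho al (2 * tt n e) ^ 3))
      with (-(m*m) * al * ((1 - cos (2 * tt n e)) / rho al (2 * tt n e) ^ 3)) by (unfold Rdiv; ring).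
    rewrite Ed_val by auto. field. lra. }
  rewrite E2 in E1. rewrite E1 in HG. rewrite ngon_lo in HG by lia. rewrite Ang0, cos_0 in HG.
  assert (Hpos := Sinv_pos n Hn).
  assert (Hal3 : 0 < al ^ 3) by (apply pow_lt; auto).
  apply Rmult_eq_reg_l with (m * al * / (4 * al ^ 3)).
  2:{ apply Rgt_not_eq. apply Rmult_lt_0_compat. nra. apply Rinv_0_lt_compat. lra. }
  transitivity (m * al). 2:{ field. lra. }
  replace (m * al * / (4 * al ^ 3) * (m * Sinv n)) with (- (-(m*m) * al * / (4 * al ^ 3) * Sinv n)) by ring.
  rewrite HG. ring.
Qed.

Lemma sum_gen n m al A B Cc : (2 <= n)%nat -> 0 < al ->
  rsum (n - 1) (fun e => m*m*(((1/2)*(A*(1 - cos (2*(2*tt n e))) + B*sin (2*(2*tt n e)))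
                              - 3*Cc*sin (2*tt n e)) / rho al (2*tt n e) ^ 3))
  = m*m*(1/2)*A*((Sinv n - Ssin n)/al^3).
Proof.
  intros Hn Ha.
  transitivity (rsum (n - 1) (fun e => (m*m*(1/2)*A) * ((1 - cos (2*(2*tt n e))) / rho al (2*tt n e) ^ 3)
       + (m*m*(1/2)*B) * (sin (2*(2*tt n e)) / rho al (2*tt n e) ^ 3)
       - (m*m*3*Cc) * (sin (2*tt n e) / rho al (2*tt n e) ^ 3))).
  { apply rsum_ext; intros. unfold Rdiv. ring. }
  rewrite rsum_minus, rsum_plus, !rsum_scal.
  assert (O2s : rsum (n-1) (fun e => sin (2*(2*tt n e)) / rho al (2*tt n e) ^ 3) = 0).
  { apply (odd_sum n (fun x => sin (2*x) / rho al x ^ 3)); [lia| apply O2_odd]. }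
  assert (O1s : rsum (n-1) (fun e => sin (2*tt n e) / rho al (2*tt n e) ^ 3) = 0).
  { apply (odd_sum n (fun x => sin x / rho al x ^ 3)); [lia| apply O1_odd]. }
  assert (Evs : rsum (n-1) (fun e => (1 - cos (2*(2*tt n e))) / rho al (2*tt n e) ^ 3) = (Sinv n - Ssin n)/al^3).
  { transitivity (rsum (n-1) (fun e => / al ^ 3 * / sin (tt n e) - / al ^ 3 * sin (tt n e))).
    - apply rsum_ext; intros e He. rewrite Ev_val by (auto; apply sin_tt_pos; auto). unfold Rdiv. ring.
    - rewrite rsum_minus, !rsum_scal. unfold Sinv, Ssin, Rdiv. ring. }
  rewrite O2s, O1s, Evs. ring.
Qed.

Lemma comp_sum n m al b k : (2 <= n)%nat -> 0 < m -> 0 < al -> (k < 2 * n)%nat ->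
  m * Sinv n = 4 * al ^ 3 ->
  rsum (2 * n) (fun l => H2 n m (ngon n al) k l * wv n b l) = m * lambda14 n * wv n b k.
Proof.
  intros Hn Hm Ha Hk HS.
  assert (Hpos := Sinv_pos n Hn).
  assert (Hal : al ^ 3 = m * Sinv n / 4) by lra.
  rewrite red, lambda_eq by auto.
  destruct (Nat.lt_ge_cases k n) as [Hkn|Hkn].
  - transitivity (rsum n (fun j => rsum j (fun i => (dl k i - dl k j) * Xx n m (ngon n al) (wv n b) i j))).
    { apply rsum_ext; intros j Hj. apply rsum_ext; intros i Hi.
      rewrite (dl_ne k (i+n)), (dl_ne k (j+n)) by lia. ring. }
    rewrite (pair_sum n k _ (Phx m al b (Ang n k))) by
      (try lia; intros; try apply Xx_anti; try apply Xx_Phx; try lia; apply Phx_per).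
    transitivity (rsum (n - 1) (fun e => m*m*(((1/2)*(cos (2 * Ang n k + b)*(1 - cos (2*(2*tt n e)))
          + sin (2 * Ang n k + b)*sin (2*(2*tt n e))) - 3*sin b*sin (2*tt n e)) / rho al (2*tt n e) ^ 3))).
    { apply rsum_ext; intros e He. rewrite ang2 by lia.
      apply Phx_dec; auto. apply cos2_lt1, sin_tt_pos; auto. }
    rewrite sum_gen by auto. rewrite wv_lo by auto. rewrite Hal. field. split; lra.
  - set (p := (k - n)%nat). assert (Ek : k = (p + n)%nat) by (unfold p; lia).
    assert (Hp : (p < n)%nat) by (unfold p; lia).
    rewrite Ek.
    transitivity (rsum n (fun j => rsum j (fun i => (dl p i - dl p j) * Xy n m (ngon n al) (wv n b) i j))).
    { apply rsum_ext; intros j Hj. apply rsum_ext; intros i Hi.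
      rewrite (dl_ne (p+n) i), (dl_ne (p+n) j), !dl_shift by lia. ring. }
    rewrite (pair_sum n p _ (Phy m al b (Ang n p))) by
      (try lia; intros; try apply Xy_anti; try apply Xy_Phy; try lia; apply Phy_per).
    transitivity (rsum (n - 1) (fun e => m*m*(((1/2)*(sin (2 * Ang n p + b)*(1 - cos (2*(2*tt n e)))
          + (- cos (2 * Ang n p + b))*sin (2*(2*tt n e))) - 3*cos b*sin (2*tt n e)) / rho al (2*tt n e) ^ 3))).
    { apply rsum_ext; intros e He. rewrite ang2 by lia.
      rewrite Phy_dec; auto. unfold Rdiv; ring. apply cos2_lt1, sin_tt_pos; auto. }
    rewrite sum_gen by auto. rewrite wv_hi. rewrite Hal. field. split; lra.
Qed.

Lemma vvec_wv n l : (1 <= n)%nat -> vvec n l = wv n 0 l.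
Proof.
  intros Hn. assert (INR n <> 0) by (apply not_0_INR; lia).
  unfold vvec, wv, Ang. destruct (Nat.ltb l n); f_equal; field; auto.
Qed.

Lemma cos_PI2_plus x : cos (x + PI / 2) = - sin x.
Proof. rewrite cos_plus, cos_PI2, sin_PI2. ring. Qed.
Lemma sin_PI2_plus x : sin (x + PI / 2) = cos x.
Proof. rewrite sin_plus, cos_PI2, sin_PI2. ring. Qed.

Lemma Jmul_wv n l : (1 <= n)%nat -> (l < 2 * n)%nat -> Jmul n (vvec n) l = wv n (PI / 2) l.
Proof.
  intros Hn Hl. assert (INR n <> 0) by (apply not_0_INR; lia).
  unfold Jmul. destruct (Nat.ltb l n) eqn:E.
  - apply Nat.ltb_lt in E. rewrite wv_lo by auto. rewrite cos_PI2_plus.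
    unfold vvec. destruct (Nat.ltb (l + n) n) eqn:E2; [apply Nat.ltb_lt in E2; lia|].
    replace (l + n - n)%nat with l by lia. unfold Ang. f_equal. f_equal. field; auto.
  - apply Nat.ltb_ge in E. unfold wv. rewrite (proj2 (Nat.ltb_ge l n) E). rewrite sin_PI2_plus.
    unfold vvec. rewrite (proj2 (Nat.ltb_lt (l - n) n)) by lia. unfold Ang. f_equal. field; auto.
Qed.

Theorem theorem14 (n : nat) (m alpha : R)
  (D : nat -> (nat -> R) -> R) (H : nat -> nat -> R) :
  (2 <= n)%nat -> 0 < m -> 0 < alpha ->
  (forall k, (k < 2 * n)%nat ->
     is_partial (Vpot n m) (ngon n alpha) k (- (m * ngon n alpha k))) ->
  (forall q k, collision_free n q -> (k < 2 * n)%nat ->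
     is_partial (Vpot n m) q k (D k q)) ->
  (forall k l, (k < 2 * n)%nat -> (l < 2 * n)%nat ->
     is_partial (D k) (ngon n alpha) l (H k l)) ->
  let W := fun k l => H k l / m in
  forall k, (k < 2 * n)%nat ->
    mv n W (vvec n) k = lambda14 n * vvec n k /\
    Jinvmul n (mv n W (Jmul n (vvec n))) k = lambda14 n * vvec n k.
Proof.
  intros Hn Hm Ha Hdar HD HH W k Hk.
  assert (Hcf := ngon_cf n alpha Hn Ha).
  assert (HG : forall k q, collision_free n q -> (k < 2 * n)%nat -> D k q = G1 n m k q).
  { intros k' q Hq Hk'. eapply uniqueness_limite. apply (HD q k' Hq Hk'). apply V_deriv; auto. }
  assert (HS : m * Sinv n = 4 * alpha ^ 3).
  { apply darboux; auto. eapply uniqueness_limite. apply V_deriv; auto. apply Hdar. lia. }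
  assert (HHe : forall k l, (k < 2 * n)%nat -> (l < 2 * n)%nat -> H k l = H2 n m (ngon n alpha) k l).
  { intros k' l Hk' Hl.
    destruct (local_cf n (ngon n alpha) l Hcf) as [d [Hd Hloc]].
    apply (uniqueness_limite (fun t => D k' (upd (ngon n alpha) l t)) (ngon n alpha l)).
    - exact (HH k' l Hk' Hl).
    - apply dpl_local with (g := fun t => G1 n m k' (upd (ngon n alpha) l t)) (d := d).
      + exact Hd.
      + intros t Ht. apply HG; auto.
      + apply G1_deriv; auto. }
  assert (Hmv : forall x k', (k' < 2 * n)%nat ->
     mv n W x k' = / m * rsum (2 * n) (fun l => H2 n m (ngon n alpha) k' l * x l)).
  { intros x k' Hk'. unfold mv, W. rewrite <- rsum_scal. apply rsum_ext; intros l Hl.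
    rewrite HHe by lia. field. lra. }
  split.
  - rewrite Hmv by auto.
    rewrite (rsum_ext _ _ (fun l => H2 n m (ngon n alpha) k l * wv n 0 l))
      by (intros; rewrite vvec_wv by lia; reflexivity).
    rewrite comp_sum by auto. rewrite vvec_wv by lia. field. lra.
  - unfold Jinvmul. destruct (Nat.ltb k n) eqn:E.
    + apply Nat.ltb_lt in E. rewrite Hmv by lia.
      rewrite (rsum_ext _ _ (fun l => H2 n m (ngon n alpha) (k + n) l * wv n (PI / 2) l))
        by (intros; rewrite Jmul_wv by lia; reflexivity).
      rewrite comp_sum by (auto; lia). rewrite wv_hi, sin_PI2_plus.
      rewrite vvec_wv, wv_lo by lia. rewrite Rplus_0_r. field. lra.
    + apply Nat.ltb_ge in E. rewrite Hmv by lia.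
      rewrite (rsum_ext _ _ (fun l => H2 n m (ngon n alpha) (k - n) l * wv n (PI / 2) l))
        by (intros; rewrite Jmul_wv by lia; reflexivity).
      rewrite comp_sum by (auto; lia). rewrite wv_lo, cos_PI2_plus by lia.
      rewrite vvec_wv by lia. unfold wv. rewrite (proj2 (Nat.ltb_ge k n) E).
      rewrite Rplus_0_r. field. lra.
Qed.
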